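(* Let $A$ be a nonempty set of positive integers and $n$ a positive integer. Then (a) $\displaystyle\sum_{k=1}^{n}N^p_A(k)\big(q^e_A(n-k)-q^o_A(n-k)\big)=\tau_A(n)$; (b) $\displaystyle\sum_{k=1}^{n}N^q_A(k)\big(p^e_A(n-k)-p^o_A(n-k)\big)=\tau^s_A(n)$.
   Context: For a set $A$ of positive integers: $N^p_A(n)$ (resp. $N^q_A(n)$) is the total number of parts, summed over all partitions (resp. partitions into pairwise distinct parts) of $n$ with all parts in $A$. $p^e_A(n)$ (resp. $p^o_A(n)$) is the number of partitions of $n$ with parts in $A$ having an even (resp. odd) number of parts; $q^e_A(n)$, $q^o_A(n)$ are the analogous counts for partitions into distinct parts from $A$; conventions $p^e_A(0)=q^e_A(0)=1$, $p^o_A(0)=q^o_A(0)=0$. $\tau_A(n)=\#\{a\in A:a\mid n\}$ and $\tau^s_A(n)=\sum_{a\in A,\,a\mid n}(-1)^{n/a-1}$. *)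

(* Defs.v *)
From mathcomp Require Import all_boot all_order all_algebra.
Set Implicit Arguments. Unset Strict Implicit. Unset Printing Implicit Defensive.
Import GRing.Theory Num.Theory.

(* A partition of n with parts in A is encoded by its multiplicity function
   m : {0..n} -> {0..n}; m i = multiplicity of the part i.
   Since parts are >= 1, parts and multiplicities are at most n, so this
   encoding is a bijection with partitions of n into parts from A. *)
Definition parts_ok (A : pred nat) (n : nat) (m : {ffun 'I_n.+1 -> 'I_n.+1}) :=
  [forall i : 'I_n.+1, (m i != 0 :> nat) ==> (A i && (0 < i))] &&
  ((\sum_(i < n.+1) i * m i)%N == n).

Definition pset (A : pred nat) (n : nat) : {set {ffun 'I_n.+1 -> 'I_n.+1}} :=
  [set m | parts_ok A m].

Definition qset (A : pred nat) (n : nat) : {set {ffun 'I_n.+1 -> 'I_n.+1}} :=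
  [set m | parts_ok A m && [forall i : 'I_n.+1, (m i <= 1)%N]].

Definition nparts (n : nat) (m : {ffun 'I_n.+1 -> 'I_n.+1}) : nat :=
  (\sum_(i < n.+1) m i)%N.

Definition Np (A : pred nat) (n : nat) : nat :=
  (\sum_(m in pset A n) nparts m)%N.
Definition Nq (A : pred nat) (n : nat) : nat :=
  (\sum_(m in qset A n) nparts m)%N.

Definition pe (A : pred nat) (n : nat) : nat :=
  #|[set m in pset A n | ~~ odd (nparts m)]|.
Definition po (A : pred nat) (n : nat) : nat :=
  #|[set m in pset A n | odd (nparts m)]|.
Definition qe (A : pred nat) (n : nat) : nat :=
  #|[set m in qset A n | ~~ odd (nparts m)]|.
Definition qo (A : pred nat) (n : nat) : nat :=
  #|[set m in qset A n | odd (nparts m)]|.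

(* tau_A(n) = #{a in A : a | n}  (n > 0, so such a lie in [1, n]) *)
Definition tauA (A : pred nat) (n : nat) : nat :=
  (\sum_(1 <= a < n.+1 | A a && (a %| n)) 1)%N.

Definition tausA (A : pred nat) (n : nat) : int :=
  (\sum_(1 <= a < n.+1 | A a && (a %| n)%N) (-1) ^+ (n %/ a).-1)%R.

(* Main.v *)
Require Import Defs.
From mathcomp Require Import all_boot all_order all_algebra ring.
Import GRing.Theory Num.Theory.
Set Implicit Arguments. Unset Strict Implicit.
Local Open Scope ring_scope.

Definition eqlo (k : nat) (p q : {poly int}) := forall l, (l <= k)%N -> p`_l = q`_l.

Lemma eqlo_refl k p : eqlo k p p. Proof. by []. Qed.
Lemma eqlo_sym k p q : eqlo k p q -> eqlo k q p.
Proof. by move=> h l hl; rewrite h. Qed.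
Lemma eqlo_trans k p q r : eqlo k p q -> eqlo k q r -> eqlo k p r.
Proof. by move=> h1 h2 l hl; rewrite h1 // h2. Qed.
Lemma eqlo_add k p q p' q' : eqlo k p p' -> eqlo k q q' -> eqlo k (p + q) (p' + q').
Proof. by move=> h1 h2 l hl; rewrite !coefD h1 // h2. Qed.
Lemma eqlo_opp k p p' : eqlo k p p' -> eqlo k (- p) (- p').
Proof. by move=> h1 l hl; rewrite !coefN h1. Qed.
Lemma eqlo_mul k p q p' q' : eqlo k p p' -> eqlo k q q' -> eqlo k (p * q) (p' * q').
Proof.
move=> h1 h2 l hl; rewrite !coefM; apply: eq_bigr => [[j hj]] _ /=.
rewrite h1; last by apply: leq_trans hl; rewrite -ltnS.
by rewrite h2 // (leq_trans (leq_subr _ _) hl).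
Qed.
Lemma eqlo_sum k (I : Type) (r : seq I) (P : pred I) F G :
  (forall i, P i -> eqlo k (F i) (G i)) ->
  eqlo k (\sum_(i <- r | P i) F i) (\sum_(i <- r | P i) G i).
Proof. move=> h; apply: (big_ind2 (eqlo k)) => // ????; exact: eqlo_add. Qed.
Lemma eqlo_prod k (I : Type) (r : seq I) (P : pred I) F G :
  (forall i, P i -> eqlo k (F i) (G i)) ->
  eqlo k (\prod_(i <- r | P i) F i) (\prod_(i <- r | P i) G i).
Proof. move=> h; apply: (big_ind2 (eqlo k)) => // ????; exact: eqlo_mul. Qed.
Lemma eqlo_Xn k e p : (k < e)%N -> eqlo k (p * 'X^e) 0.
Proof.
move=> he l hl; rewrite coefMXn coef0.
by rewrite (leq_ltn_trans hl he).
Qed.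

Definition S (f : nat -> nat -> int) (N i : nat) : {poly int} :=
  \sum_(j < N.+1) (f i j)%:P * 'X^(i * j).
Definition Prod (f : nat -> nat -> int) (N : nat) : {poly int} :=
  \prod_(i < N.+1) S f N i.

Lemma coef_Prod f N k : (Prod f N)`_k =
  \sum_(m : {ffun 'I_N.+1 -> 'I_N.+1} | (\sum_(i < N.+1) i * m i)%N == k)
     \prod_(i < N.+1) f i (m i).
Proof.
rewrite /Prod /S bigA_distr_bigA /= coef_sum [RHS]big_mkcond /=. idtac.
apply: congr_big => // m _.
rewrite big_split /= -rmorph_prod /= prodrXr coefCM coefXn.
case: eqP => [->|]; first by rewrite eqxx mulr1.
by move=> /eqP; rewrite eq_sym => /negbTE ->; rewrite mulr0.
Qed.

Definition okA (A : pred nat) i := A i && (0 < i)%N.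
Definition okp (A : pred nat) i (j : nat) := (j == 0)%N || okA A i.
Definition okq (A : pred nat) i (j : nat) := (j == 0)%N || (okA A i && (j <= 1)%N).
Definition fNp A (i0 : nat) i j : int := (okp A i j)%:R * (if i == i0 then j%:R else 1).
Definition fNq A (i0 : nat) i j : int := (okq A i j)%:R * (if i == i0 then j%:R else 1).
Definition gp A i j : int := (okp A i j)%:R * (-1) ^+ j.
Definition gq A i j : int := (okq A i j)%:R * (-1) ^+ j.

Lemma prod_indic (I : finType) (P : pred I) :
  \prod_(i : I) ((P i)%:R : int) = ([forall i, P i])%:R.
Proof.
case: forallP => [h|].
  by rewrite big1 // => i _; rewrite h.
move=> hn; have : ~~ [forall i, P i] by apply/forallP.
rewrite negb_forall => /existsP [i /negbTE hi].
by rewrite (bigD1 i) //= hi mul0r.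
Qed.

Lemma sign_diff (T : finType) (X : {set T}) (h : T -> nat) :
  (#|[set m in X | ~~ odd (h m)]|%:Z - #|[set m in X | odd (h m)]|%:Z) =
  \sum_(m in X) (-1) ^+ (h m).
Proof.
rewrite (bigID (fun m => odd (h m))) /=.
rewrite (eq_bigr (fun _ => -1)); last by move=> m /andP [_ hm]; rewrite -signr_odd hm.
rewrite [X in _ = _ + X](eq_bigr (fun _ => 1)); last first.
  by move=> m /andP [_ hm]; rewrite -signr_odd (negbTE hm).
rewrite (eq_bigl (fun m => m \in [set m in X | odd (h m)])); last by move=> m; rewrite inE.
rewrite [X in _ = _ + X](eq_bigl (fun m => m \in [set m in X | ~~ odd (h m)])); last by move=> m; rewrite inE.
rewrite !sumr_const -!natz.
by rewrite addrC mulNrn.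
Qed.

Lemma parts_okE A N (m : {ffun 'I_N.+1 -> 'I_N.+1}) :
  parts_ok A m = [forall i : 'I_N.+1, okp A i (m i)] && ((\sum_(i < N.+1) i * m i)%N == N).
Proof.
rewrite /parts_ok; congr (_ && _); apply: eq_forallb => i.
by rewrite /okp implybE negbK.
Qed.

Lemma qset_okE A N (m : {ffun 'I_N.+1 -> 'I_N.+1}) :
  (m \in qset A N) = [forall i : 'I_N.+1, okq A i (m i)] && ((\sum_(i < N.+1) i * m i)%N == N).
Proof.
rewrite inE parts_okE; case: eqP => _; rewrite ?andbF ?andbT //.
apply/idP/idP.
  move=> /andP [/forallP h1 /forallP h2]; apply/forallP => i.
  move: (h1 i) (h2 i); rewrite /okq /okp; case: (m i : nat) => [|[|j]] //=.
  by rewrite andbT.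
move=> /forallP h; apply/andP; split; apply/forallP => i; move: (h i);
  rewrite /okq /okp; case: (m i : nat) => [|[|j]] //=; rewrite ?andbT ?andbF //.
Qed.

Lemma prod_sel N (F : 'I_N.+1 -> nat) (i0 : 'I_N.+1) :
  \prod_(i < N.+1) (if (i : nat) == i0 then (F i)%:R else 1) = (F i0)%:R :> int.
Proof.
rewrite (bigD1 i0) //= eqxx big1 ?mulr1 // => j hj.
by have -> : ((j : nat) == i0) = false by apply/negbTE.
Qed.

Lemma Np_coef A k : (Np A k)%:Z = \sum_(i0 < k.+1) (Prod (fNp A i0) k)`_k.
Proof.
under eq_bigr do rewrite coef_Prod.
rewrite exchange_big /= -natz /Np natr_sum big_mkcond [RHS]big_mkcond /=.
apply: congr_big => // m _.
rewrite inE parts_okE.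
case: eqP => _; last by rewrite andbF.
rewrite andbT.
rewrite (eq_bigr (fun i0 : 'I_k.+1 => ([forall i : 'I_k.+1, okp A i (m i)])%:R * (m i0 : nat)%:R)); last first.
  by move=> i0 _; rewrite /fNp big_split /= prod_indic prod_sel.
by rewrite -mulr_sumr -natr_sum; case: forallP => _; rewrite ?mul1r ?mul0r.
Qed.

Lemma Nq_coef A k : (Nq A k)%:Z = \sum_(i0 < k.+1) (Prod (fNq A i0) k)`_k.
Proof.
under eq_bigr do rewrite coef_Prod.
rewrite exchange_big /= -natz /Nq natr_sum big_mkcond [RHS]big_mkcond /=.
apply: congr_big => // m _.
rewrite qset_okE.
case: eqP => _; last by rewrite andbF.
rewrite andbT.
rewrite (eq_bigr (fun i0 : 'I_k.+1 => ([forall i : 'I_k.+1, okq A i (m i)])%:R * (m i0 : nat)%:R)); last first.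
  by move=> i0 _; rewrite /fNq big_split /= prod_indic prod_sel.
by rewrite -mulr_sumr -natr_sum; case: forallP => _; rewrite ?mul1r ?mul0r.
Qed.

Lemma Dq_coef A k : (qe A k)%:Z - (qo A k)%:Z = (Prod (gq A) k)`_k.
Proof.
rewrite /qe /qo sign_diff coef_Prod big_mkcond [RHS]big_mkcond /=.
apply: congr_big => // m _.
rewrite qset_okE; case: eqP => _; last by rewrite andbF.
rewrite andbT /gq big_split /= prod_indic prodrXr.
by case: forallP => _; rewrite ?mul1r ?mul0r.
Qed.

Lemma Dp_coef A k : (pe A k)%:Z - (po A k)%:Z = (Prod (gp A) k)`_k.
Proof.
rewrite /pe /po sign_diff coef_Prod big_mkcond [RHS]big_mkcond /=.
apply: congr_big => // m _.
rewrite inE parts_okE; case: eqP => _; last by rewrite andbF.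
rewrite andbT /gp big_split /= prod_indic prodrXr.
by case: forallP => _; rewrite ?mul1r ?mul0r.
Qed.

Lemma eqlo_sum0 k (I : Type) (r : seq I) (P : pred I) F :
  (forall i, P i -> eqlo k (F i) 0) -> eqlo k (\sum_(i <- r | P i) F i) 0.
Proof.
move=> h; apply: eqlo_trans (@eqlo_sum k I r P F (fun _ => 0) h) _.
by rewrite big1.
Qed.

Lemma eqlo_sum0_nat k m n F :
  (forall j, (m <= j < n)%N -> eqlo k (F j) 0) -> eqlo k (\sum_(m <= j < n) F j) 0.
Proof.
move=> h; rewrite big_nat_cond; apply: eqlo_sum0 => j /andP [hj _]; exact: h.
Qed.

Lemma eqlo_prod1_nat k m n F :
  (forall j, (m <= j < n)%N -> eqlo k (F j) 1) -> eqlo k (\prod_(m <= j < n) F j) 1.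
Proof.
move=> h; rewrite big_nat_cond.
apply: eqlo_trans (@eqlo_prod k nat _ _ F (fun _ => 1) _) _.
  by move=> j /andP [hj _]; exact: h.
by rewrite big1.
Qed.

Lemma S_hi f N k i : (k < i)%N -> f i 0%N = 1 -> eqlo k (S f N i) 1.
Proof.
move=> hki hf; rewrite /S big_ord_recl /= muln0 expr0 mulr1 hf -[X in eqlo _ _ X]addr0.
apply: eqlo_add => //; apply: eqlo_sum0 => j _; apply: eqlo_Xn.
by apply: (leq_trans hki); rewrite leq_pmulr.
Qed.

Lemma S_lo f N k i : (k <= N)%N -> (forall j, (0 < j)%N -> f 0%N j = 0) ->
  eqlo k (S f N i) (S f k i).
Proof.
move=> hkN hf0; rewrite /S -!(big_mkord xpredT (fun j => (f i j)%:P * 'X^(i * j))) (big_cat_nat _ (n:=k.+1)) //=.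
rewrite -[X in eqlo _ _ X]addr0; apply: eqlo_add => //.
apply: eqlo_sum0_nat => j /andP [hj _].
case: i => [|i].
  by rewrite hf0 ?(leq_trans _ hj) // mul0r => l _; rewrite coef0.
by apply: eqlo_Xn; apply: (leq_trans hj); rewrite leq_pmull.
Qed.

Lemma Prod_trunc f N k : (k <= N)%N -> (forall j, (0 < j)%N -> f 0%N j = 0) ->
  (forall i, (k < i)%N -> f i 0%N = 1) -> eqlo k (Prod f N) (Prod f k).
Proof.
move=> hkN hf0 hf1; rewrite /Prod -!(big_mkord xpredT (S f _)) (big_cat_nat _ (n:=k.+1)) //=.
rewrite -[X in eqlo _ _ X]mulr1; apply: eqlo_mul.
  by apply: eqlo_prod => i _; apply: S_lo.
apply: eqlo_prod1_nat => i /andP [hi _].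
by apply: S_hi => //; apply: hf1.
Qed.

Lemma eqlo_Xn' k e : (k < e)%N -> eqlo k 'X^e 0.
Proof. by move=> h; rewrite -[X in eqlo _ X _]mul1r; apply: eqlo_Xn. Qed.

Lemma Prod_factor0 f N i0 k : (i0 <= N)%N -> eqlo k (S f N i0) 0 -> eqlo k (Prod f N) 0.
Proof.
move=> hi h; rewrite /Prod -(big_mkord xpredT (S f N)) (big_cat_nat _ (n:=i0)) //=; last exact: leqW.
rewrite [\prod_(i0 <= i < N.+1) _]big_ltn //=.
apply: eqlo_trans (eqlo_mul (eqlo_refl _) (eqlo_mul h (eqlo_refl _))) _.
by rewrite mul0r mulr0.
Qed.

Lemma inner_div (c : nat -> int) n a : (0 < a)%N -> (0 < n)%N ->
  \sum_(j < n.+1) c j * ((n == a * j.+1)%N)%:R = if (a %| n)%N then c (n %/ a).-1 else 0.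
Proof.
move=> ha hn; case: ifP => hd.
  have hq : (0 < n %/ a)%N by rewrite divn_gt0 // dvdn_leq.
  have hqn : ((n %/ a).-1 < n.+1)%N.
    by rewrite ltnS (leq_trans (leq_pred _)) // leq_div.
  rewrite (bigD1 (Ordinal hqn)) //= prednK //.
  rewrite mulnC divnK // eqxx mulr1.
  rewrite big1 ?addr0 // => j hj; case: eqP; rewrite ?mulr0 // => hn'.
  have hj2 : (n %/ a).-1 = j by move: (j : nat) hn' => jj ->; rewrite mulKn.
  by move: hj; rewrite -val_eqE /= hj2 eqxx.
rewrite big1 // => j _; case: eqP; rewrite ?mulr0 // => hn'.
by move: hd; move: (j : nat) hn' => jj ->; rewrite dvdn_mulr.
Qed.

Lemma prod_selp N (Z : {poly int}) (i0 : nat) : (i0 < N.+1)%N ->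
  \prod_(i < N.+1) (if (i : nat) == i0 then Z else 1) = Z.
Proof.
move=> hi; rewrite (bigD1 (Ordinal hi)) //= eqxx big1 ?mulr1 // => j hj.
by have -> : ((j : nat) == i0) = false by apply/negbTE; rewrite -val_eqE in hj.
Qed.

Lemma main_gen (f : nat -> nat -> nat -> int) (g : nat -> nat -> int) (okf : pred nat)
  (c : nat -> int) n :
  (forall i0 i : nat, (i0 <= n)%N -> (i <= n)%N -> i != i0 ->
     eqlo n (S (f i0) n i * S g n i) 1) ->
  (forall i0, (i0 <= n)%N -> eqlo n (S (f i0) n i0 * S g n i0)
      (if okf i0 then \sum_(j < n.+1) (c j)%:P * 'X^(i0 * j.+1) else 0)) ->
  (forall i0, okf i0 -> (0 < i0)%N) -> (0 < n)%N ->
  (\sum_(i0 < n.+1) Prod (f i0) n * Prod g n)`_n =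
  \sum_(1 <= a < n.+1 | okf a && (a %| n)%N) c (n %/ a).-1.
Proof.
move=> h1 h2 hok hn.
set Z := fun i0 : nat => if okf i0 then \sum_(j < n.+1) (c j)%:P * 'X^(i0 * j.+1) else 0.
have E : eqlo n (\sum_(i0 < n.+1) Prod (f i0) n * Prod g n) (\sum_(i0 < n.+1) Z i0).
  apply: eqlo_sum => i0 _.
  rewrite /Prod -big_split /= -(prod_selp (Z i0) (ltn_ord i0)).
  apply: eqlo_prod => i _; case: eqP => [->|hne].
    exact: h2 (leq_ord i0).
  by apply: h1; rewrite ?leq_ord //; apply/eqP.
rewrite E // coef_sum.
rewrite (eq_bigr (fun i0 : 'I_n.+1 => if okf i0 then (if (i0 %| n)%N then c (n %/ i0).-1 else 0) else 0)); last first.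
  move=> i0 _; rewrite /Z; case: ifP => hi0; last by rewrite coef0.
  rewrite -(inner_div c (hok _ hi0) hn) coef_sum; apply: eq_bigr => j _.
  by rewrite coefCM coefXn.
rewrite -(big_mkord xpredT (fun i0 => if okf i0 then (if (i0 %| n)%N then c (n %/ i0).-1 else 0) else 0)).
rewrite big_ltn //=.
have -> : okf 0%N = false by apply/negP => /hok.
rewrite add0r [RHS]big_mkcond /=; apply: eq_bigr => i _.
by case: (okf i); case: (i %| n)%N.
Qed.

Lemma eqlo_opp0 k p : eqlo k p 0 -> eqlo k (- p) 0.
Proof. by move=> h; rewrite -oppr0; apply: eqlo_opp. Qed.

Lemma S_const f N i : (forall j, (0 < j)%N -> f i j = 0) -> S f N i = (f i 0%N)%:P.
Proof.
move=> h; rewrite /S big_ord_recl big1 ?addr0 /= ?muln0 ?expr0 ?mulr1 // => j _.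
by rewrite h // polyC0 mul0r.
Qed.

Lemma tele (u : nat -> {poly int}) n :
  \sum_(j < n.+1) (u j - u j.+1) = u 0%N - u n.+1.
Proof.
rewrite -(big_mkord xpredT (fun j => u j - u j.+1)).
have -> : \sum_(0 <= j < n.+1) (u j - u j.+1) = - \sum_(0 <= j < n.+1) (u j.+1 - u j).
  by rewrite -sumrN; apply: eq_bigr => j _; rewrite opprB.
by rewrite telescope_sumr // opprB.
Qed.

Lemma T1 n i : (0 < i)%N ->
  eqlo n ((\sum_(j < n.+1) 1%:P * 'X^(i * j)) * (1 - 'X^i)) 1.
Proof.
move=> hi; rewrite mulr_suml.
rewrite (eq_bigr (fun j : 'I_n.+1 => (fun j => 'X^(i * j)) j - (fun j => 'X^(i * j)) j.+1)); last first.
  by move=> j _ /=; rewrite mulnS exprD polyC1; ring.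
rewrite (tele (fun j => 'X^(i * j))) muln0 expr0 -[X in eqlo _ _ X]subr0.
apply: eqlo_add => //; apply: eqlo_opp; apply: eqlo_Xn'.
by rewrite (leq_trans (ltnSn n)) // leq_pmull.
Qed.

Lemma T2 n i : (0 < i)%N ->
  eqlo n ((\sum_(j < n.+1) (j%:R)%:P * 'X^(i * j)) * (1 - 'X^i))
         (\sum_(j < n.+1) 1%:P * 'X^(i * j.+1)).
Proof.
move=> hi; rewrite mulr_suml.
set u := fun j : nat => (j%:R : int)%:P * 'X^(i * j).
rewrite (eq_bigr (fun j : 'I_n.+1 => (u j - u j.+1) + 1%:P * 'X^(i * j.+1))); last first.
  move=> j _; rewrite /u mulnS exprD -natr1 polyCD polyC1; ring.
rewrite big_split /= tele /u mulr0n polyC0 mul0r sub0r addrC -[X in eqlo _ _ X]addr0.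
apply: eqlo_add => //; apply: eqlo_opp0; apply: eqlo_Xn.
by rewrite (leq_trans (ltnSn n)) // leq_pmull.
Qed.

Lemma T3 n i : (0 < i)%N ->
  eqlo n ((1 + 'X^i) * \sum_(j < n.+1) (((-1) ^+ j : int))%:P * 'X^(i * j)) 1.
Proof.
move=> hi; rewrite mulr_sumr.
set u := fun j : nat => (((-1) ^+ j : int))%:P * 'X^(i * j).
rewrite (eq_bigr (fun j : 'I_n.+1 => u j - u j.+1)); last first.
  move=> j _; rewrite /u mulnS exprD exprS polyCM polyCN polyC1; ring.
rewrite tele /u muln0 expr0 expr0 polyC1 mulr1 -[X in eqlo _ _ X]subr0.
apply: eqlo_add => //; apply: eqlo_opp; apply: eqlo_Xn.
by rewrite (leq_trans (ltnSn n)) // leq_pmull.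
Qed.

Lemma T4 n i :
  'X^i * \sum_(j < n.+1) (((-1) ^+ j : int))%:P * 'X^(i * j) =
  \sum_(j < n.+1) (((-1) ^+ j : int))%:P * 'X^(i * j.+1).
Proof.
rewrite mulr_sumr; apply: eq_bigr => j _; rewrite mulnS exprD; ring.
Qed.

Lemma S_zero0 f N k i : f i 0%N = 0 -> (k < i)%N -> eqlo k (S f N i) 0.
Proof.
move=> h hki; rewrite /S big_ord_recl /= h polyC0 mul0r add0r.
apply: eqlo_sum0 => j _; apply: eqlo_Xn.
by apply: (leq_trans hki); rewrite leq_pmulr.
Qed.

Lemma coef_bridge (F : nat -> nat -> nat -> int) N k : (k <= N)%N ->
  (forall i0 j, (0 < j)%N -> F i0 0%N j = 0) ->
  (forall i0 i, (i0 <= k)%N -> (k < i)%N -> F i0 i 0%N = 1) ->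
  (forall i0, (k < i0)%N -> F i0 i0 0%N = 0) ->
  (\sum_(i0 < N.+1) Prod (F i0) N)`_k = \sum_(i0 < k.+1) (Prod (F i0) k)`_k.
Proof.
move=> hkN h0 h1 h2.
rewrite coef_sum -(big_mkord xpredT (fun i0 => (Prod (F i0) N)`_k)).
rewrite (big_cat_nat _ (n:=k.+1)) //= big_mkord.
rewrite [X in _ + X]big_nat_cond [X in _ + X]big1 ?addr0.
  apply: eq_bigr => i0 _; apply: Prod_trunc => //.
    exact: h0.
  by move=> i hi; apply: h1 => //; rewrite -ltnS.
move=> i0 /andP [/andP [hi0 hi0N] _].
rewrite (@Prod_factor0 (F i0) N i0 k _ _ k (leqnn k)) ?coef0 //.
by apply: S_zero0 => //; apply: h2.
Qed.

Definition NPp A N := \sum_(i0 < N.+1) Prod (fNp A i0) N.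
Definition NQp A N := \sum_(i0 < N.+1) Prod (fNq A i0) N.

Lemma NP_coef A N k : (k <= N)%N -> (NPp A N)`_k = (Np A k)%:Z.
Proof.
move=> hk; rewrite Np_coef /NPp coef_bridge //.
- by move=> i0 j hj; rewrite /fNp /okp /okA ltnn andbF orbF eqn0Ngt hj mul0r.
- move=> i0 i hi0 hi; rewrite /fNp /okp eqxx /=.
  have -> : (i == i0) = false by apply/negbTE; rewrite neq_ltn (leq_ltn_trans hi0 hi) orbT.
  by rewrite mulr1.
- by move=> i0 _; rewrite /fNp eqxx mulr0n mulr0.
Qed.

Lemma NQ_coef A N k : (k <= N)%N -> (NQp A N)`_k = (Nq A k)%:Z.
Proof.
move=> hk; rewrite Nq_coef /NQp coef_bridge //.
- by move=> i0 j hj; rewrite /fNq /okq /okA ltnn andbF andFb orbF eqn0Ngt hj mul0r.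
- move=> i0 i hi0 hi; rewrite /fNq /okq eqxx /=.
  have -> : (i == i0) = false by apply/negbTE; rewrite neq_ltn (leq_ltn_trans hi0 hi) orbT.
  by rewrite mulr1.
- by move=> i0 _; rewrite /fNq eqxx mulr0n mulr0.
Qed.

Lemma Dq_coefN A N k : (k <= N)%N -> (Prod (gq A) N)`_k = (qe A k)%:Z - (qo A k)%:Z.
Proof.
move=> hk; rewrite Dq_coef; apply: Prod_trunc => //.
- by move=> j hj; rewrite /gq /okq /okA ltnn andbF andFb orbF eqn0Ngt hj mul0r.
Qed.

Lemma Dp_coefN A N k : (k <= N)%N -> (Prod (gp A) N)`_k = (pe A k)%:Z - (po A k)%:Z.
Proof.
move=> hk; rewrite Dp_coef; apply: Prod_trunc => //.
- by move=> j hj; rewrite /gp /okp /okA ltnn andbF orbF eqn0Ngt hj mul0r.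
Qed.

Lemma S_two f n i : (0 < n)%N -> (forall j, (1 < j)%N -> f i j = 0) ->
  S f n i = (f i 0%N)%:P + (f i 1%N)%:P * 'X^i.
Proof.
case: n => [//|n] _ h; rewrite /S big_ord_recl big_ord_recl big1 ?addr0 /=.
  by rewrite muln0 muln1 expr0 mulr1.
by move=> j _; rewrite h // polyC0 mul0r.
Qed.

Lemma okA_pos A i : okA A i -> (0 < i)%N.
Proof. by case/andP. Qed.

Lemma Np0 A : Np A 0 = 0%N.
Proof.
rewrite /Np big1 // => m _; rewrite /nparts big_ord1.
by case: (m ord0) => [[|]].
Qed.

Lemma Nq0 A : Nq A 0 = 0%N.
Proof.
rewrite /Nq big1 // => m _; rewrite /nparts big_ord1.
by case: (m ord0) => [[|]].
Qed.


Lemma partA A n : (0 < n)%N ->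
  (\sum_(1 <= k < n.+1)
      (Np A k)%:Z * ((qe A (n - k))%:Z - (qo A (n - k))%:Z))%R = (tauA A n)%:Z.
Proof.
move=> hn.
have -> : (\sum_(1 <= k < n.+1)
      (Np A k)%:Z * ((qe A (n - k))%:Z - (qo A (n - k))%:Z)) =
    (NPp A n * Prod (gq A) n)`_n.
  rewrite coefM -(big_mkord xpredT (fun j => (NPp A n)`_j * (Prod (gq A) n)`_(n - j))).
  rewrite big_ltn // NP_coef // Np0 mul0r add0r.
  apply: eq_big_nat => k /andP [_ hk].
  have hk' : (k <= n)%N by rewrite -ltnS.
  by rewrite (NP_coef _ hk') (Dq_coefN _ (leq_subr k n)).
rewrite /NPp mulr_suml (@main_gen (fNp A) (gq A) (okA A) (fun _ => 1) n); last first.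
- exact: hn.
- exact: okA_pos.
- move=> i0 _; case hA: (okA A i0).
    have -> : S (fNp A i0) n i0 = \sum_(j < n.+1) (j%:R)%:P * 'X^(i0 * j).
      by apply: eq_bigr => j _; rewrite /fNp /okp hA orbT eqxx mul1r.
    rewrite (@S_two (gq A)) //; last first.
      by move=> j hj; rewrite /gq /okq hA /= leqNgt hj eqn0Ngt (ltnW hj) /= mul0r.
    rewrite /gq /okq hA /= expr0 expr1 !mulr1 polyC1 polyCN mulN1r.
    exact: T2 (okA_pos hA).
  rewrite (@S_const (fNp A i0)); last first.
    by move=> j hj; rewrite /fNp /okp hA orbF eqn0Ngt hj mul0r.
  by rewrite /fNp eqxx mulr0n mulr0 polyC0 mul0r.
- move=> i0 i _ _ hne; case hA: (okA A i).
    have -> : S (fNp A i0) n i = \sum_(j < n.+1) 1%:P * 'X^(i * j).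
      by apply: eq_bigr => j _; rewrite /fNp /okp hA orbT (negbTE hne) mulr1.
    rewrite (@S_two (gq A)) //; last first.
      by move=> j hj; rewrite /gq /okq hA /= leqNgt hj eqn0Ngt (ltnW hj) /= mul0r.
    rewrite /gq /okq hA /= expr0 expr1 !mulr1 polyC1 polyCN mulN1r.
    exact: T1 (okA_pos hA).
  rewrite (@S_const (gq A)); last first.
    by move=> j hj; rewrite /gq /okq hA /= orbF eqn0Ngt hj mul0r.
  rewrite (@S_const (fNp A i0)); last first.
    by move=> j hj; rewrite /fNp /okp hA orbF eqn0Ngt hj mul0r.
  move=> l _; rewrite /fNp /gq /okp /okq /= (negbTE hne) expr0 -polyCM !coefC. by rewrite !mul1r.
rewrite /tauA -natz natr_sum [LHS]big_nat_cond [RHS]big_nat_cond.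
apply: eq_bigl => a; rewrite /okA; case ha: (0 < a)%N; rewrite ?andbT //=.
Qed.

Lemma partB A n : (0 < n)%N ->
  (\sum_(1 <= k < n.+1)
      (Nq A k)%:Z * ((pe A (n - k))%:Z - (po A (n - k))%:Z))%R = tausA A n.
Proof.
move=> hn.
have -> : (\sum_(1 <= k < n.+1)
      (Nq A k)%:Z * ((pe A (n - k))%:Z - (po A (n - k))%:Z)) =
    (NQp A n * Prod (gp A) n)`_n.
  rewrite coefM -(big_mkord xpredT (fun j => (NQp A n)`_j * (Prod (gp A) n)`_(n - j))).
  rewrite big_ltn // NQ_coef // Nq0 mul0r add0r.
  apply: eq_big_nat => k /andP [_ hk].
  have hk' : (k <= n)%N by rewrite -ltnS.
  by rewrite (NQ_coef _ hk') (Dp_coefN _ (leq_subr k n)).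
rewrite /NQp mulr_suml (@main_gen (fNq A) (gp A) (okA A) (fun j => (-1) ^+ j) n); last first.
- exact: hn.
- exact: okA_pos.
- move=> i0 _; case hA: (okA A i0).
    have -> : S (gp A) n i0 = \sum_(j < n.+1) (((-1) ^+ j : int))%:P * 'X^(i0 * j).
      by apply: eq_bigr => j _; rewrite /gp /okp hA orbT mul1r.
    rewrite (@S_two (fNq A i0)) //; last first.
      by move=> j hj; rewrite /fNq /okq hA /= leqNgt hj eqn0Ngt (ltnW hj) /= mul0r.
    rewrite /fNq /okq hA /= eqxx !mulr1n mulr0n mulr0 polyC0 add0r mulr1 polyC1 mul1r T4.
    by [].
  rewrite (@S_const (fNq A i0)); last first.
    by move=> j hj; rewrite /fNq /okq hA /= eqn0Ngt hj mul0r.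
  by rewrite /fNq eqxx mulr0n mulr0 polyC0 mul0r.
- move=> i0 i _ _ hne; case hA: (okA A i).
    have -> : S (gp A) n i = \sum_(j < n.+1) (((-1) ^+ j : int))%:P * 'X^(i * j).
      by apply: eq_bigr => j _; rewrite /gp /okp hA orbT mul1r.
    rewrite (@S_two (fNq A i0)) //; last first.
      by move=> j hj; rewrite /fNq /okq hA /= leqNgt hj eqn0Ngt (ltnW hj) /= mul0r.
    rewrite /fNq /okq hA /= (negbTE hne) !mulr1 polyC1 mul1r.
    exact: T3 (okA_pos hA).
  rewrite (@S_const (gp A)); last first.
    by move=> j hj; rewrite /gp /okp hA /= orbF eqn0Ngt hj mul0r.
  rewrite (@S_const (fNq A i0)); last first.
    by move=> j hj; rewrite /fNq /okq hA /= orbF eqn0Ngt hj mul0r.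
  move=> l _; rewrite /fNq /gp /okp /okq /= (negbTE hne) expr0 -polyCM !coefC.
  by rewrite !mul1r.
rewrite /tausA [LHS]big_nat_cond [RHS]big_nat_cond.
apply: eq_bigl => a; rewrite /okA; case ha: (0 < a)%N; rewrite ?andbT //=.
Qed.

Theorem theorem2 (A : pred nat) (hApos : forall a, A a -> (0 < a)%N)
  (hAne : exists a, A a) (n : nat) (hn : (0 < n)%N) :
  (\sum_(1 <= k < n.+1)
      (Np A k)%:Z * ((qe A (n - k))%:Z - (qo A (n - k))%:Z))%R = (tauA A n)%:Z
  /\
  (\sum_(1 <= k < n.+1)
      (Nq A k)%:Z * ((pe A (n - k))%:Z - (po A (n - k))%:Z))%R = tausA A n.
Proof.
split; [exact: partA | exact: partB].
Qed.
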